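(* Let $n>m=0$, $d\ge1$, $a\in\mathbb{C}^\times$, and $f_a(x_2,\dots,x_n)=\sum_{i=2}^nx_i^d+a/\prod_{i=2}^nx_i^d$. Then: (1) $f_a$ is convenient, i.e. the origin lies in the interior of $\Delta(f_a)$; (2) $\Delta(f_a)$ is the set of $(u_2,\dots,u_n)\in\mathbb{R}^{n-1}$ satisfying $h_{n+1}:=\sum_{i=2}^nu_i\le d$ and $h_{i_0}:=\sum_{i=2}^nu_i-n\,u_{i_0}\le d$ for $2\le i_0\le n$; (3) $f_a$ is non-degenerate with respect to $\Delta(f_a)$.
   Context: For a Laurent polynomial $g=\sum_\tau c(\tau)z^\tau$ in $N$ variables, $\mathrm{Supp}(g)=\{\tau:c(\tau)\ne0\}$, the Newton polytope $\Delta(g)$ is the convex hull of $\mathrm{Supp}(g)\cup\{0\}$ in $\mathbb{R}^N$, and $g$ is non-degenerate with respect to $\Delta(g)$ if for each face $\sigma$ of $\Delta(g)$ not containing $0$, $g_\sigma=\sum_{\tau\in\sigma\cap\mathbb{Z}^N}c(\tau)z^\tau$ has no critical point in $(\mathbb{C}^\times)^N$. A monomial $\prod x_i^{u_i}$ is identified with the lattice point $(u_2,\dots,u_n)$. *)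

(* Defs.v *)
From HB Require Import structures.
From mathcomp Require Import all_boot all_order all_algebra.
From mathcomp Require Import all_classical all_reals all_analysis.
From mathcomp Require Import complex.
Set Implicit Arguments. Unset Strict Implicit. Unset Printing Implicit Defensive.
Import Order.TTheory GRing.Theory Num.Theory.
Import numFieldTopology.Exports numFieldNormedType.Exports.
Local Open Scope ring_scope.
Local Open Scope classical_set_scope.

Section Laurent.
Variables (R : realType) (N : nat).
Local Notation C := (complex R).

Definition expo := 'rV[int]_N.

(* A Laurent polynomial g = sum_tau c(tau) z^tau : coefficient function with
   finite support, given with a sequence containing the support. *)
Record laurent := Laurent {
  lcoef : expo -> C;
  lsupp : seq expo;
  lsuppP : forall tau, lcoef tau != 0 -> tau \in lsupp }.

Definition Supp (g : laurent) : seq expo :=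
  [seq tau <- undup (lsupp g) | lcoef g tau != 0].

Definition toR (tau : expo) : 'rV[R]_N := map_mx (fun k : int => k%:~R) tau.

Definition conv (s : seq 'rV[R]_N) : set 'rV[R]_N :=
  [set u | exists lam : 'I_(size s) -> R,
      (forall k, 0 <= lam k) /\ \sum_k lam k = 1 /\
      u = \sum_k lam k *: s`_(nat_of_ord k)].

Definition Newton (g : laurent) : set 'rV[R]_N :=
  conv (0 :: [seq toR tau | tau <- Supp g]).

Definition convenient (g : laurent) : Prop := (interior (Newton g)) 0.

Definition dotR (w u : 'rV[R]_N) : R := \sum_i w ord0 i * u ord0 i.

Definition is_face (P sigma : set 'rV[R]_N) : Prop :=
  exists w : 'rV[R]_N,
    sigma = [set u | P u /\ forall v, P v -> dotR w v <= dotR w u].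

Definition lrestr_coef (g : laurent) (sigma : set 'rV[R]_N) (tau : expo) : C :=
  if `[< sigma (toR tau) >] then lcoef g tau else 0.

Lemma lrestr_suppP (g : laurent) (sigma : set 'rV[R]_N) tau :
  lrestr_coef g sigma tau != 0 -> tau \in lsupp g.
Proof.
rewrite /lrestr_coef; case: ifP => _; last by rewrite eqxx.
exact: lsuppP.
Qed.

Definition lrestr (g : laurent) (sigma : set 'rV[R]_N) : laurent :=
  Laurent (@lrestr_suppP g sigma).

Definition mono (tau : expo) (z : 'rV[C]_N) : C := \prod_i z ord0 i ^ tau ord0 i.

Definition unitE (j : 'I_N) : expo := delta_mx ord0 j.

(* value at z of the partial derivative d g / d z_j  (d z^tau/dz_j = tau_j z^(tau-e_j)) *)
Definition dpartial (g : laurent) (j : 'I_N) (z : 'rV[C]_N) : C :=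
  \sum_(tau <- undup (lsupp g)) lcoef g tau * (tau ord0 j)%:~R * mono (tau - unitE j) z.

Definition torus_critical (g : laurent) (z : 'rV[C]_N) : Prop :=
  (forall i, z ord0 i != 0) /\ forall j, dpartial g j z = 0.

Definition nondegenerateN (g : laurent) : Prop :=
  forall sigma, is_face (Newton g) sigma -> ~ sigma 0 ->
    ~ exists z, torus_critical (lrestr g sigma) z.

End Laurent.

(* f_a(x_2,...,x_n) = sum_{i=2}^n x_i^d + a / prod_{i=2}^n x_i^d ;
   variables x_2..x_n are indexed by 'I_(n.-1) (index i <-> x_{i+2}). *)
Section Fa.
Variables (R : realType) (n d : nat) (a : complex R).
Local Notation N := n.-1.

Definition fa_coef (tau : expo N) : complex R :=
  (if tau == const_mx (- (d%:Z)) then a else 0)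
  + \sum_(i < N) (if tau == (d%:Z) *: unitE i then 1 else 0).

Lemma fa_suppP tau : fa_coef tau != 0 ->
  tau \in const_mx (- (d%:Z)) :: [seq (d%:Z) *: unitE i | i <- enum 'I_N].
Proof.
rewrite /fa_coef in_cons.
have [->|_] := eqVneq tau (const_mx (- (d%:Z))); first by [].

rewrite add0r /= => H; apply/mapP.
have : [exists i : 'I_N, (if tau == (d%:Z) *: unitE i then 1 else 0 : complex R) != 0].
  apply: contraR H => /existsPn Hn.
  by rewrite big1 // => i _; apply/eqP; rewrite -[_ == 0]negbK Hn.
case/existsP => i Hi; exists i; first by rewrite mem_enum.
by move: Hi; have [//|_] := eqVneq tau ((d%:Z) *: unitE i); rewrite eqxx.
Qed.

Definition fa : laurent R N := Laurent fa_suppP.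
End Fa.

(* Main.v *)
Require Import Defs.
From HB Require Import structures.
From mathcomp Require Import all_boot all_order all_algebra.
From mathcomp Require Import all_classical all_reals all_analysis.
From mathcomp Require Import complex.
From mathcomp Require Import zify ring lra.
Import Order.TTheory GRing.Theory Num.Theory.
Import numFieldTopology.Exports numFieldNormedType.Exports.
Local Open Scope ring_scope.
Local Open Scope classical_set_scope.
Set Implicit Arguments. Unset Strict Implicit. Unset Printing Implicit Defensive.

Section Conv.
Variables (R : realType) (N : nat).

Lemma dotR_sum (w : 'rV[R]_N) m (lam : 'I_m -> R) (s : 'I_m -> 'rV[R]_N) :
  dotR w (\sum_k lam k *: s k) = \sum_k lam k * dotR w (s k).
Proof.
rewrite /dotR.
under eq_bigr do rewrite summxE big_distrr.
rewrite exchange_big /=; apply: eq_bigr => k _; rewrite big_distrr /=.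
by apply: eq_bigr => i _; rewrite mxE mulrCA.
Qed.

Lemma conv_dot_le (s : seq 'rV[R]_N) w c u : Defs.conv s u ->
  (forall g, g \in s -> dotR w g <= c) -> dotR w u <= c.
Proof.
move=> [lam [l0 [l1 ->]]] H; rewrite dotR_sum.
apply: (@le_trans _ _ (\sum_k lam k * c)); last by rewrite -mulr_suml l1 mul1r.
apply: ler_sum => k _; apply: ler_wpM2l => //; apply: H; exact: mem_nth.
Qed.

Lemma conv_mem (s : seq 'rV[R]_N) g : g \in s -> Defs.conv s g.
Proof.
move=> gs; move: gs.
rewrite -index_mem => ks.
exists (fun k : 'I_(size s) => (val k == index g s)%:R); split.
  by move=> k0; rewrite ler0n.
split.
  rewrite (bigD1 (Ordinal ks)) //= eqxx big1 ?addr0 // => i /eqP ni.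
  case: eqP => // ie; by case: ni; apply: val_inj.
rewrite (bigD1 (Ordinal ks)) //= eqxx scale1r big1 ?addr0 ?nth_index //.
  by rewrite -index_mem.
move=> i /eqP ni; case: eqP => ie; last by rewrite scale0r.
by case: ni; apply: val_inj.
Qed.

Lemma seq_argmax (T : eqType) (f : T -> R) (x0 : T) (s : seq T) :
  exists2 g, g \in x0 :: s & forall y, y \in x0 :: s -> f y <= f g.
Proof.
elim: s x0 => [|x s IH] x0; first by exists x0 => [|y]; rewrite ?inE // => /eqP->.
have [g gin gmax] := IH x.
have [le|lt] := leP (f x0) (f g).
  exists g; first by rewrite inE gin orbT.
  by move=> y; rewrite inE => /orP[/eqP->//|]; exact: gmax.
exists x0; first by rewrite inE eqxx.
move=> y; rewrite inE => /orP[/eqP->//|/gmax ygx]; exact: (le_trans ygx (ltW lt)).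
Qed.

End Conv.
Section S.
Variables (R : realType) (N d : nat) (a : complex R).
Hypothesis d1 : (1 <= d)%N.
Hypothesis a0 : a != 0.

Definition v0 : expo N := const_mx (- (d%:Z)).
Definition ve (i : 'I_N) : expo N := (d%:Z) *: Defs.unitE i.
Definition L := v0 :: [seq ve i | i <- enum 'I_N].

Lemma veE i j : ve i ord0 j = (d%:Z) * (i == j)%:R.
Proof. by rewrite !mxE eqxx /= eq_sym. Qed.

Lemma ve_inj : injective ve.
Proof.
move=> i j /matrixP /(_ ord0 i); rewrite !veE eqxx.
have [//|ij] := eqVneq j i. rewrite /= mulr1 mulr0 => -[] d0.
by move: d1; rewrite d0.
Qed.

Lemma v0_ve i : v0 != ve i.
Proof.
apply/negP => /eqP /matrixP /(_ ord0 i); rewrite veE !mxE eqxx mulr1 => /eqP.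
move/eqP; lia.
Qed.

Lemma L_uniq : uniq L.
Proof.
rewrite /= map_inj_uniq ?enum_uniq ?andbT //; last exact: ve_inj.
by apply/mapP => -[i _ /eqP]; rewrite (negbTE (v0_ve i)).
Qed.

Lemma coef_v0 : @fa_coef R N.+1 d a v0 = a.
Proof.
rewrite /fa_coef eqxx big1 ?addr0 // => i _.
by rewrite (negbTE (v0_ve i)).
Qed.

Lemma coef_ve j : @fa_coef R N.+1 d a (ve j) = 1.
Proof.
rewrite /fa_coef eq_sym (negbTE (v0_ve j)) add0r (bigD1 j) //= eqxx big1 ?addr0 //.
move=> i ij; case: eqP => // /ve_inj ji; by rewrite ji eqxx in ij.
Qed.

Lemma Supp_fa : Supp (fa N.+1 d a) = L.
Proof.
rewrite /Supp (_ : undup _ = L); last exact: (undup_id L_uniq).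
apply/all_filterP/allP => x.
rewrite inE => /orP[/eqP->|/mapP[i _ ->]]; first by rewrite /= coef_v0.
by rewrite /= coef_ve oner_neq0.
Qed.

Definition h0 (u : 'rV[R]_N) := \sum_i u ord0 i.
Definition hj (j : 'I_N) (u : 'rV[R]_N) := h0 u - N.+1%:R * u ord0 j.

Lemma dot_h0 u : dotR (const_mx 1) u = h0 u.
Proof. by rewrite /dotR /h0; apply: eq_bigr => i _; rewrite mxE mul1r. Qed.

Lemma dot_hj j u : dotR (const_mx 1 - N.+1%:R *: delta_mx 0 j) u = hj j u.
Proof.
rewrite /dotR /hj /h0 (bigD1 j) //= [in RHS](bigD1 j) //= !mxE !eqxx /=.
rewrite mulrBl mul1r mulr1.
rewrite (eq_bigr (fun i => u ord0 i)); first by rewrite addrAC.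
move=> i ij.
by rewrite !mxE eqxx /= (negbTE ij) mulr0 subr0 mul1r.
Qed.

Lemma toR_v0 j : toR R v0 ord0 j = - d%:R.
Proof. by rewrite !mxE intrN. Qed.

Lemma toR_ve i j : toR R (ve i) ord0 j = d%:R * (i == j)%:R.
Proof. by rewrite mxE veE intrM /= natz. Qed.

Lemma h0_v0 : h0 (toR R v0) = - (N%:R * d%:R).
Proof.
rewrite /h0; under eq_bigr do rewrite toR_v0.
by rewrite sumr_const card_ord mulNrn -mulr_natl !mulr1 mulr_natl.
Qed.

Lemma h0_ve i : h0 (toR R (ve i)) = d%:R.
Proof.
rewrite /h0 (bigD1 i) //= big1 ?addr0 ?toR_ve ?eqxx ?mulr1 //.
by move=> k ki; rewrite toR_ve eq_sym (negbTE ki) mulr0.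
Qed.

Definition G := 0 :: [seq toR R tau | tau <- L].

Lemma Hset_of_conv u : Defs.conv G u ->
  h0 u <= d%:R /\ forall j, hj j u <= d%:R.
Proof.
move=> cu; split.
  rewrite -dot_h0; apply: (conv_dot_le cu) => g; rewrite dot_h0.
  rewrite inE => /orP[/eqP->|]; first by rewrite /h0 big1 // => i _; rewrite mxE.
  rewrite /= inE => /orP[/eqP->|]; first by rewrite h0_v0; have := ler0n R N; have := ler0n R d; nra.
  rewrite -map_comp => /mapP[i _ ->] /=; by rewrite h0_ve.
move=> j; rewrite -dot_hj; apply: (conv_dot_le cu) => g; rewrite dot_hj.
rewrite inE => /orP[/eqP->|].
  by rewrite /hj /h0 big1 ?mxE ?mulr0 ?subr0 // => i _; rewrite mxE.
rewrite /= inE => /orP[/eqP->|].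
  rewrite /hj h0_v0 toR_v0 -natr1; have := ler0n R N; have := ler0n R d; nra.
rewrite -map_comp => /mapP[i _ ->] /=; rewrite /hj h0_ve toR_ve.
by rewrite -natr1 lerBlDr lerDl ?mulr_ge0 ?addr_ge0 ?ler0n.
Qed.

Lemma G_nth (i : 'I_N) : G`_i.+2 = toR R (ve i).
Proof.
rewrite /G /L /= -map_comp (nth_map i) ?nth_ord_enum // size_enum_ord; exact: ltn_ord.
Qed.

Lemma D0 : 0 < d%:R :> R.
Proof. by rewrite ltr0n. Qed.

Lemma sG : size G = N.+2.
Proof. by rewrite /G /L /= !size_map -enumT size_enum_ord. Qed.

Lemma sumG (V : nmodType) (F : nat -> V) :
  \sum_(k < size G) F k = F 0%N + (F 1%N + \sum_(i < N) F i.+2).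
Proof.
by rewrite -(big_mkord xpredT) sG !big_nat_recl // big_mkord.
Qed.

Lemma conv_of_Hset u : h0 u <= d%:R -> (forall j, hj j u <= d%:R) ->
  Defs.conv G u.
Proof.
move=> H0 Hj.
set D : R := d%:R.
have D0 : 0 < D := D0.
set t := \big[Num.max/0]_(j < N) (- u ord0 j).
have t0 : 0 <= t by apply: bigmax_ge_id.
have tj j : - u ord0 j <= t by apply: le_bigmax.
have tb : N.+1%:R * t <= D - h0 u.
  rewrite -ler_pdivlMl ?ltr0n //; apply: bigmax_le.
    by apply: mulr_ge0; [rewrite invr_ge0 ler0n | rewrite subr_ge0].
  move=> j _; rewrite ler_pdivlMl ?ltr0n //.
  by have := Hj j; rewrite /hj; lra.
set S := \sum_(i < N) (u ord0 i + t).
have SE : S = h0 u + N%:R * t.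
  by rewrite /S big_split /= sumr_const card_ord mulr_natl.
pose lamn (k : nat) : R :=
  match k with
  | 0 => 1 - (t + S) / D
  | 1 => t / D
  | m.+2 => oapp (fun i => (u ord0 i + t) / D) 0 (insub m : option 'I_N)
  end.
have lamE (i : 'I_N) : lamn i.+2 = (u ord0 i + t) / D.
  by rewrite /lamn /= valK.
exists (fun k => lamn k); split.
  case=> [[|[|m]] km]; rewrite /lamn /=.
  - rewrite subr_ge0 ler_pdivrMr // mul1r SE.
    by move: tb; rewrite -natr1; lra.
  - exact: divr_ge0.
  - case: insubP => [i _ _|_] /=; last by [].
    by apply: divr_ge0; [have := tj i; lra | exact: ltW].
split.
  rewrite (sumG lamn).
  under eq_bigr do rewrite lamE.
  rewrite -mulr_suml -/S /lamn /=; field; exact: lt0r_neq0.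
apply/rowP => j; rewrite summxE (sumG (fun k => (lamn k *: G`_k) ord0 j)).
under eq_bigr do rewrite mxE lamE G_nth toR_ve.
have -> : G`_0 = 0 by [].
have -> : G`_1 = toR R v0 by [].
rewrite !mxE (bigD1 j) //= big1 ?addr0; last first.
  by move=> i ij; rewrite (negbTE ij) !mulr0.
rewrite eqxx /lamn /= /D intrN mulr1 mulr0 add0r. field. exact: lt0r_neq0.
Qed.

Lemma mono_neq0 tau (z : 'rV[R[i]]_N) : (forall i, z ord0 i != 0) -> mono tau z != 0.
Proof. by move=> hz; rewrite /mono; apply/prodf_neq0 => i _; apply: expfz_neq0. Qed.

Lemma monoB tau j (z : 'rV[R[i]]_N) : (forall i, z ord0 i != 0) ->
  mono (tau - Defs.unitE j) z = mono tau z / z ord0 j.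
Proof.
move=> hz; rewrite /mono.
rewrite (eq_bigr (fun i => z ord0 i ^ tau ord0 i * z ord0 i ^ (- (i == j)%:R))); last first.
  by move=> i _; rewrite !mxE -expfzDr // eqxx /= eq_sym.
rewrite big_split /=; congr (_ * _).
rewrite (bigD1 j) //= eqxx big1 ?mulr1 //.
by move=> i ij; rewrite (negbTE ij) oppr0 expr0z.
Qed.

Definition cs sigma tau := lrestr_coef (fa N.+1 d a) sigma tau.

Lemma dpartial_restr sigma j (z : 'rV[R[i]]_N) : (forall i, z ord0 i != 0) ->
  dpartial (lrestr (fa N.+1 d a) sigma) j z * z ord0 j =
  d%:R * (cs sigma (ve j) * mono (ve j) z - cs sigma v0 * mono v0 z).
Proof.
move=> hz; rewrite /dpartial.
rewrite (_ : undup _ = L); last exact: (undup_id L_uniq).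
rewrite big_cons big_map big_enum /= mulrDl mulr_suml.
rewrite (bigD1 j) //= big1 ?addr0; last first.
  by move=> i ij; rewrite veE (negbTE ij) /= mulr0 mulr0z mulr0 !mul0r.
rewrite !monoB // veE eqxx mulr1 !mxE /= -/(cs sigma v0) -/(cs sigma (ve j)).
have zj := hz j.
rewrite intrN -!pmulrn. field. done.
Qed.
End S.

Section Main.
Variables (R : realType) (N d : nat) (a : R[i]).
Hypothesis d1 : (1 <= d)%N.
Hypothesis a0 : a != 0.

Lemma NewtonE : Newton (fa N.+1 d a) = Defs.conv (G R N d).
Proof. by rewrite /Newton Supp_fa. Qed.

Lemma HE : Newton (fa N.+1 d a) =
  [set u | h0 u <= d%:R /\ forall j, hj j u <= d%:R].
Proof.
rewrite NewtonE; apply/seteqP; split => u /=; first exact: Hset_of_conv.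
by case; exact: conv_of_Hset.
Qed.

Lemma norm_entry (y : 'rV[R]_N) i : `|y ord0 i| <= `|y|.
Proof.
have /mapP[j Hj ->] : `|y ord0 i| \in [seq `|y x.1 x.2| | x : 'I_1 * 'I_N].
  by apply/mapP; exists (ord0, i) => //=; rewrite mem_enum.
by rewrite [leRHS]/Num.Def.normr /= mx_normrE; apply/bigmax_geP; right => /=; exists j.
Qed.

Lemma conv_part : convenient (fa N.+1 d a).
Proof.
rewrite /convenient /interior HE /=.
set m : R := N.+1%:R.
have m0 : 0 < m by rewrite ltr0n.
set e : R := (m *+ 2)^-1.
have e0 : 0 < e by rewrite invr_gt0 mulrn_wgt0.
have me : m * e * 2 = 1.
  by rewrite /e mulrC mulrA mulr_natl divff // lt0r_neq0 // mulrn_wgt0.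
have Nm : N%:R = m - 1 by rewrite /m -natr1 addrK.
have D1 : 1 <= d%:R :> R by rewrite ler1n.
apply: (@filterS _ _ _ (ball (0:'rV[R]_N) e)); last exact: nbhsx_ballx.
move=> y.
rewrite -ball_normE /ball_ /= sub0r normrN => ye.
have yb i : - e < y ord0 i < e.
  by rewrite -ltr_norml (le_lt_trans (norm_entry y i)).
have hb : h0 y <= N%:R * e.
  apply: (@le_trans _ _ (\sum_(i < N) e)); last by rewrite sumr_const card_ord mulr_natl.
  by apply: ler_sum => i _; have /andP[_ /ltW] := yb i.
split.
  apply: le_trans hb _; rewrite Nm; have := ltW e0; nra.
move=> j; rewrite /hj -/m.
have : - (m * e) <= m * y ord0 j.
  by rewrite -mulrN ler_wpM2l ?(ltW m0) //; have /andP[/ltW] := yb j.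
move: hb; rewrite Nm; have := ltW e0; nra.
Qed.

Lemma dot_ve (w : 'rV[R]_N) (j : 'I_N) : dotR w (toR R (ve d j)) = w ord0 j * d%:R.
Proof.
rewrite /dotR (bigD1 j) //= big1 ?addr0 ?toR_ve ?eqxx ?mulr1 //.
by move=> i ij; rewrite toR_ve eq_sym (negbTE ij) !mulr0.
Qed.

Lemma dot_sum0 (w : 'rV[R]_N) : dotR w (toR R (v0 N d)) + \sum_j dotR w (toR R (ve d j)) = 0.
Proof.
rewrite /dotR; under [X in _ + X]eq_bigr do rewrite -/(dotR _ _) dot_ve.
rewrite -big_split big1 // => i _; by rewrite toR_v0 /= mulrN addNr.
Qed.

Lemma cs_sig sigma (tau : expo N) c : @fa_coef R N.+1 d a tau = c -> c != 0 ->
  (cs d a sigma tau != 0) = `[< sigma (toR R tau) >].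
Proof.
move=> ce c0; rewrite /cs /lrestr_coef /=; case: ifP => _; last by rewrite eqxx.
by rewrite ce c0.
Qed.

Lemma nondeg_part : nondegenerateN (fa N.+1 d a).
Proof.
move=> sigma [w sE] ns0 [z [hz hcrit]].
have key j : `[< sigma (toR R (ve d j)) >] = `[< sigma (toR R (v0 N d)) >].
  have := dpartial_restr d1 a0 sigma j hz; rewrite hcrit mul0r => /esym /eqP.
  rewrite mulf_eq0 pnatr_eq0 (negbTE (lt0n_neq0 d1)) /= subr_eq0 => /eqP E.
  rewrite -(cs_sig sigma (coef_ve d1 a0 j)) ?oner_neq0 //.
  rewrite -(cs_sig sigma (coef_v0 N d1 a0)) //.
  apply/idP/idP => H.
    by move: (mulf_neq0 H (mono_neq0 (ve d j) hz)); rewrite E mulf_eq0 negb_or => /andP[].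
  by move: (mulf_neq0 H (mono_neq0 (v0 N d) hz)); rewrite -E mulf_eq0 negb_or => /andP[].
have dot0 : dotR w 0 = 0 by rewrite /dotR big1 // => i _; rewrite mxE mulr0.
have P0 : Newton (fa N.+1 d a) 0.
  by rewrite NewtonE; apply: conv_mem; rewrite inE eqxx.
case: (asboolP (sigma (toR R (v0 N d)))) => s0.
  case: (pselect (exists2 v, Newton (fa N.+1 d a) v & 0 < dotR w v)) => [[v Pv vpos]|hn]; last first.
    apply: ns0; rewrite sE; split => // v Pv; rewrite dot0 leNgt; apply/negP => pos.
    by apply: hn; exists v.
  have sj j : sigma (toR R (ve d j)) by apply/asboolP; rewrite key; apply/asboolP.
  have := dot_sum0 w.
  have h1 : 0 < dotR w (toR R (v0 N d)).
    by move: s0; rewrite sE => -[_ /(_ v Pv)]; apply: lt_le_trans.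
  have h2 : 0 <= \sum_j dotR w (toR R (ve d j)).
    apply: sumr_ge0 => j _; move: (sj j); rewrite sE => -[_ /(_ v Pv)] H.
    exact: ltW (lt_le_trans vpos H).
  by move=> E; have := ler_ltD h2 h1; rewrite addr0 addrC E ltxx.
have [g gin gmax] := seq_argmax (dotR w) 0 [seq toR R tau | tau <- L N d].
have sg : sigma g.
  rewrite sE; split; first by rewrite NewtonE; apply: conv_mem.
  by move=> v; rewrite NewtonE => cv; apply: (conv_dot_le cv) => g' /gmax.
move: gin; rewrite inE => /orP[/eqP gE|]; first by apply: ns0; rewrite -gE.
rewrite /= inE => /orP[/eqP gE|]; first by apply: s0; rewrite -gE.
rewrite -map_comp => /mapP[i _ gE]; apply: s0; apply/asboolP; rewrite -(key i).
by apply/asboolP; move: sg; rewrite gE.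
Qed.
End Main.

Unset Implicit Arguments.
Theorem lemma2p5 (R : realType) (n d : nat) (a : complex R) :
  (0 < n)%N -> (1 <= d)%N -> a != 0 ->
  [/\ convenient (fa n d a),
      Newton (fa n d a) =
        [set u : 'rV[R]_(n.-1) |
           \sum_(i < n.-1) u ord0 i <= d%:R /\
           forall i0 : 'I_(n.-1),
             \sum_(i < n.-1) u ord0 i - n%:R * u ord0 i0 <= d%:R]
    & nondegenerateN (fa n d a)].
Proof.
case: n => // N _ d1 a0; split.
- exact: conv_part.
- exact: HE.
- exact: nondeg_part.
Qed.
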